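(* Let $Q=(q_n)_{n\ge1}$ be a basic sequence that is infinite in limit, and let $i>2$ be an integer such that $\sum_{j=1}^i jl_j>\sum_{j=1}^i 2l_j$. For real $w,z\ge0$ let $$f_i(w,z)=\frac{\left(\sum_{j=1}^i 2l_j\right)+2w+z}{\left(\sum_{j=1}^i jl_j\right)+(i+1)w+z}.$$ Then for all $(w,z)\in\{0,1,\dots,l_{i+1}\}\times\{0,1,\dots,i\}$, $$f_i(w,z)<f_i(0,i+1)=\frac{\left(\sum_{j=1}^i 2l_j\right)+i+1}{\left(\sum_{j=1}^i jl_j\right)+i+1}.$$
   Context: A basic sequence is a sequence $Q=(q_n)_{n\ge1}$ of integers with $q_n\ge 2$; it is infinite in limit if $q_n\to\infty$. For each positive integer $j$ let $\nu_j=\min\{N : q_m\ge 2j^2 \text{ for all } m\ge N\}$. Define $l_1=\max(\nu_2-1,1)$ and, recursively for $i\ge 2$, $l_i=\max\big(\min\{k\in\mathbb{N} : l_1+2l_2+\cdots+(i-1)l_{i-1}+ik\ge \nu_{i+1}-1\},1\big)$, where $\mathbb{N}$ is the set of positive integers. *)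

(* Defs.v *)
From mathcomp Require Import all_boot all_order all_algebra.
From mathcomp Require Import boolp zify.
Set Implicit Arguments. Unset Strict Implicit. Unset Printing Implicit Defensive.
Import Order.TTheory GRing.Theory Num.Theory.

(* A sequence Q = (q_n)_{n>=1} is modelled as q : nat -> nat; the value q 0 is ignored. *)
Definition basic_seq (q : nat -> nat) : Prop := forall n, 1 <= n -> 2 <= q n.

Definition infinite_in_limit (q : nat -> nat) : Prop :=
  forall K, exists N, forall n, N <= n -> K <= q n.

Definition nu_pred (q : nat -> nat) (j : nat) : pred nat :=
  fun N => (0 < N) && `[< forall m, N <= m -> 2 * j ^ 2 <= q m >].

(* nu_j = min {N in N_{>0} : q_m >= 2 j^2 for all m >= N}; 0 if no such N
   (which cannot happen when q is infinite in limit). *)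
Definition nu (q : nat -> nat) (j : nat) : nat :=
  match pselect (exists N, nu_pred q j N) with
  | left H => ex_minn H
  | right _ => 0
  end.

Definition lmin_pred (S i v : nat) : pred nat :=
  fun k => (0 < k) && (v - 1 <= S + i.+1 * k).

Lemma lmin_ex (S i v : nat) : exists k, lmin_pred S i v k.
Proof.
exists v.+1; rewrite /lmin_pred /=.
have H : v - 1 <= S + i.+1 * v.+1.
  nia.
by rewrite H.
Qed.

Definition lmin (S i v : nat) : nat := ex_minn (lmin_ex S i v).

(* lS q i = (l_i, l_1 + 2 l_2 + ... + i l_i) *)
Fixpoint lS (q : nat -> nat) (i : nat) : nat * nat :=
  match i with
  | 0 => (0, 0)
  | n.+1 =>
    match n with
    | 0 => let l1 := maxn (nu q 2 - 1) 1 in (l1, l1)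
    | m.+1 =>
      (* here i = m.+2 and n = m.+1 = i - 1 *)
      let S := (lS q n).2 in
      let li := maxn (lmin S m.+1 (nu q m.+3)) 1 in
      (li, S + m.+2 * li)
    end
  end.

Definition l (q : nat -> nat) (i : nat) : nat := (lS q i).1.

Definition f_i (R : realFieldType) (q : nat -> nat) (i : nat) (w z : R) : R :=
  ((\sum_(1 <= j < i.+1) 2 * l q j)%N%:R + 2 * w + z)
  / ((\sum_(1 <= j < i.+1) j * l q j)%N%:R + (i.+1)%:R * w + z).

(* Main.v *)
Require Import Defs.
From mathcomp Require Import all_boot all_order all_algebra.
From mathcomp Require Import zify.
Import Order.TTheory GRing.Theory Num.Theory.
Local Open Scope ring_scope.

Lemma key_nat (A B L i w z : nat) : (2 < i)%N -> A = (2 * L)%N -> (B <= i * L)%N ->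
  (A < B)%N -> (z <= i)%N ->
  ((A + 2 * w + z) * (B + i.+1) < (A + i.+1) * (B + i.+1 * w + z))%N.
Proof.
move=> hi hA hB hAB hz.
have [d hd] : exists d, B = (A + d.+1)%N by exists (B - A).-1; lia.
subst A B.
have hd1 : (d.+1 <= (i - 2) * L)%N by lia.
case: (leqP (2 * w + z) i.+1) => hc.
- have h1 : (0 <= d.+1 * (i.+1 - (2 * w + z)))%N by [].
  clear h1; case: w hc => [|w] hc; nia.
- have h2 : (d.+1 * (2 * w + z - i.+1) <= (i - 2) * L * (2 * w + z - i.+1))%N.
    by rewrite leq_mul2r hd1 orbT.
  nia.
Qed.

Lemma divlt (R : realFieldType) (a b c d : R) : 0 < b -> 0 < d ->
  a * d < c * b -> a / b < c / d.
Proof.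
move=> hb hd h.
rewrite ltr_pdivrMr // mulrAC ltr_pdivlMr //.
Qed.

Theorem mainTheorem15 (R : realFieldType) (q : nat -> nat) :
  basic_seq q -> infinite_in_limit q ->
  forall i : nat, (2 < i)%N ->
  (\sum_(1 <= j < i.+1) 2 * l q j < \sum_(1 <= j < i.+1) j * l q j)%N ->
  forall w z : nat, (w <= l q i.+1)%N -> (z <= i)%N ->
  @f_i R q i w%:R z%:R < @f_i R q i 0 (i.+1)%:R /\
  @f_i R q i 0 (i.+1)%:R =
    ((\sum_(1 <= j < i.+1) 2 * l q j)%N%:R + (i.+1)%:R)
    / ((\sum_(1 <= j < i.+1) j * l q j)%N%:R + (i.+1)%:R).
Proof.
move=> _ _ i hi hAB w z hw hz.
split; last by rewrite /f_i !mulr0 !addr0.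
rewrite /f_i !mulr0 !addr0.
set A := (\sum_(1 <= j < i.+1) 2 * l q j)%N in hAB *.
set B := (\sum_(1 <= j < i.+1) j * l q j)%N in hAB *.
set L := (\sum_(1 <= j < i.+1) l q j)%N.
have hA : A = (2 * L)%N by rewrite /A /L big_distrr.
have hB : (B <= i * L)%N.
  rewrite /B /L big_distrr /= big_nat_cond [X in (_ <= X)%N]big_nat_cond; apply: leq_sum => j /andP[/andP[_ hj] _].
  by rewrite leq_mul2r -ltnS hj orbT.
have K := @key_nat A B L i w z hi hA hB hAB hz.
apply: divlt.
all: try rewrite -[2]/(2%:R).
- by rewrite -!natrM -!natrD ltr0n; lia.
- by rewrite -!natrD ltr0n; lia.
rewrite -!natrM -!natrD -!natrM ltr_nat.
exact K.
Qed.
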